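(* The matrix $J^{-1}(s^* )$ satisfies $|J^{-1}_{11}(s^* )|\ge\frac13$, and $J^{-1}_{ii}(s^* )<0$ for all $i=1,\dots,b$.
   Context: Let $N\ge1$, $\gamma\in(0,1]$, $\alpha>0$, $\lambda=1-\gamma/N^\alpha$, and $b\ge1$ an integer. The mean-field vector field is $f_k(s)=\lambda(s_{k-1}^2-s_k^2)-(s_k-s_{k+1})$, $k=1,\dots,b$, with $s_0=1,s_{b+1}=0$; $s^*$ is its unique equilibrium in $\{s\in\mathbb R^b:1\ge s_1\ge\cdots\ge s_b\ge0\}$. $J(s^* )$ is the $b\times b$ tridiagonal Jacobian of $f$ at $s^*$ with $J_{kk}=-2\lambda s^*_k-1$, $J_{k,k+1}=1$, $J_{k+1,k}=2\lambda s^*_k$; it is invertible. *)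

(* Defs.v *)
From mathcomp Require Import all_boot all_order all_algebra.
From mathcomp Require Import all_classical all_reals all_analysis.
Set Implicit Arguments. Unset Strict Implicit. Unset Printing Implicit Defensive.
Import Order.TTheory GRing.Theory Num.Theory.
Local Open Scope ring_scope.

Definition lam {R : realType} (N : nat) (gamma alpha : R) : R :=
  1 - gamma / (N%:R `^ alpha).

(* mean-field vector field component k, with s : nat -> R the extended
   sequence (s 0 = 1, s (b+1) = 0 imposed separately) *)
Definition fk {R : realType} (l : R) (s : nat -> R) (k : nat) : R :=
  l * (s k.-1 ^+ 2 - s k ^+ 2) - (s k - s k.+1).

(* Jacobian at s; 0-based row/column i corresponds to k = i+1 *)
Definition Jac {R : realType} (b : nat) (l : R) (s : nat -> R) : 'M[R]_b :=
  \matrix_(i < b, j < b)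
    if i == j then - (2 * l * s i.+1) - 1
    else if (j : nat) == i.+1 then 1
    else if (i : nat) == j.+1 then 2 * l * s j.+1
    else 0.

Definition is_ordered_equilibrium {R : realType} (b : nat) (l : R)
    (s : nat -> R) : Prop :=
  s 0%N = 1 /\ s b.+1 = 0 /\
  (forall k, (1 <= k <= b)%N -> fk l s k = 0) /\
  (s 1%N <= 1 /\ (forall k, (1 <= k < b)%N -> s k.+1 <= s k) /\ 0 <= s b).

(* Main.v *)
Require Import Defs.
From mathcomp Require Import all_boot all_order all_algebra.
From mathcomp Require Import all_classical all_reals all_analysis.
From mathcomp Require Import ring lra zify.
Set Implicit Arguments. Unset Strict Implicit. Unset Printing Implicit Defensive.
Import Order.TTheory GRing.Theory Num.Theory.
Local Open Scope ring_scope.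

Section Gen.
Variable R : realFieldType.
Variable b : nat.
Variable c : nat -> R.
Hypothesis hc : forall k, 0 <= c k.

Definition pr (a e : nat) : R := \prod_(a <= l < e) c l.
Definition AA (ii : nat) : R := \sum_(0 <= k < ii) pr k.+1 ii.
Definition BB (ii : nat) : R := \sum_(ii <= k < b.+1) pr k.+1 b.+1.
Definition TT (ii : nat) : R := pr ii b.+1.
Definition beta (ii : nat) : R := - AA ii / (TT ii * AA ii + BB ii).
Definition alpha (ii : nat) : R := 1 + beta ii * TT ii.
Definition zz (ii k : nat) : R :=
  if (k < ii)%N then alpha ii * pr k.+1 ii else beta ii * pr k.+1 b.+1.
Definition yy (ii j : nat) : R := \sum_(j <= k < b.+1) zz ii k.

Definition Jc : 'M[R]_b := \matrix_(i < b, j < b)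
    if i == j then - c i.+1 - 1
    else if (j : nat) == i.+1 then 1
    else if (i : nat) == j.+1 then c j.+1
    else 0.

Definition Xm : 'M[R]_b := \matrix_(i < b, j < b) yy i.+1 j.+1.

Lemma pr_ge0 a e : 0 <= pr a e.
Proof. by apply: prodr_ge0 => i _; apply: hc. Qed.

Lemma pr_rec a e : (a < e)%N -> pr a e = c a * pr a.+1 e.
Proof. by move=> h; rewrite /pr big_ltn. Qed.

Lemma pr_nil a : pr a a = 1.
Proof. by rewrite /pr big_geq. Qed.

Lemma AA_ge1 ii : (0 < ii)%N -> 1 <= AA ii.
Proof.
case: ii => [//|i] _; rewrite /AA big_nat_recr //= pr_nil.
rewrite lerDr; apply: sumr_ge0 => k _; exact: pr_ge0.
Qed.

Lemma BB_ge1 ii : (ii <= b)%N -> 1 <= BB ii.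
Proof.
move=> h; rewrite /BB big_nat_recr //= pr_nil.
rewrite lerDr; apply: sumr_ge0 => k _; exact: pr_ge0.
Qed.

Lemma den_gt0 ii : (0 < ii <= b)%N -> 0 < TT ii * AA ii + BB ii.
Proof.
move=> /andP[h1 h2]; have := AA_ge1 h1; have := BB_ge1 h2.
have := pr_ge0 ii b.+1; rewrite /TT => ? ? ?.
have : 0 <= pr ii b.+1 * AA ii by apply: mulr_ge0 => //; lra.
lra.
Qed.

Lemma yy_end ii : yy ii b.+1 = 0.
Proof. by rewrite /yy big_geq. Qed.

Lemma yy_step ii j : (j <= b)%N -> yy ii j = zz ii j + yy ii j.+1.
Proof. by move=> h; rewrite /yy big_ltn. Qed.

Lemma yy0 ii : (0 < ii <= b)%N -> yy ii 0 = 0.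
Proof.
move=> /andP[h1 h2]; have hd := den_gt0 (introT andP (conj h1 h2)).
rewrite /yy (big_cat_nat _ (n:=ii)) //=; last by apply: leqW.
have -> : \sum_(0 <= k < ii) zz ii k = alpha ii * AA ii.
  rewrite /AA mulr_sumr big_nat_cond [RHS]big_nat_cond.
  by apply: eq_bigr => k /andP[/andP[_ hk] _]; rewrite /zz hk.
have -> : \sum_(ii <= k < b.+1) zz ii k = beta ii * BB ii.
  rewrite /BB mulr_sumr big_nat_cond [RHS]big_nat_cond.
  by apply: eq_bigr => k /andP[/andP[hk _] _]; rewrite /zz ltnNge hk.
rewrite /alpha /beta; field; lra.
Qed.

Lemma zz_eq ii m : (0 < ii <= b)%N -> (m < b)%N ->
  zz ii m - c m.+1 * zz ii m.+1 = (m.+1 == ii)%:R.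
Proof.
move=> /andP[h1 h2] hm; rewrite /zz.
case: (ltngtP m.+1 ii) => h.
- rewrite (pr_rec h) mulr0n; ring.
- rewrite (pr_rec (a:=m.+1)) ?mulr0n //; ring.
- rewrite /alpha /TT -h (pr_rec (a:=m.+1)) ?pr_nil //=; ring.
Qed.

Lemma sum_delta (n k : nat) (g : nat -> R) :
  \sum_(0 <= j < n) (if j == k then g j else 0) = if (k < n)%N then g k else 0.
Proof.
elim: n => [|n IH]; first by rewrite big_geq.
rewrite big_nat_recr //= IH.
case: (ltngtP k n) => h.
- have -> : (k < n.+1)%N by lia.
  by rewrite addr0.
- have -> : (k < n.+1)%N = false by lia.
  by rewrite addr0.
- by rewrite h ltnSn add0r.
Qed.

Lemma prod_entry (f : nat -> R) (m : 'I_b) :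
  \sum_(j < b) f j * Jc j m =
  (if val m is m'.+1 then f m' else 0) - (c m.+1 + 1) * f m
  + (if (m.+1 < b)%N then c m.+1 * f m.+1 else 0).
Proof.
have hm := ltn_ord m.
have -> : \sum_(j < b) f j * Jc j m =
   \sum_(0 <= j < b) ((if j == m then - (c m.+1 + 1) * f j else 0)
      + (if j.+1 == m then f j else 0) + (if j == m.+1 then c m.+1 * f j else 0)).
  rewrite big_mkord; apply: eq_bigr => j _.
  rewrite /Jc mxE -val_eqE /=.
  move: (nat_of_ord j) (nat_of_ord m) => x y.
  case: (eqVneq x y) => [->|h1].
    have -> : (y.+1 == y) = false by lia.
    have -> : (y == y.+1) = false by lia.
    rewrite ?eqxx /=; ring.
  case: (eqVneq y x.+1) => [->|h2].
    have -> : (x == x.+2) = false by lia.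
    rewrite ?eqxx /=; ring.
  case: (eqVneq x y.+1) => [->|h3]; rewrite /=; try ring.
case: m hm => m hm /= _.
rewrite !big_split /= !sum_delta hm.
have -> : \sum_(0 <= j < b) (if j.+1 == m then f j else 0) = (if m is m'.+1 then f m' else 0).
  case: m hm => [|m] hm.
    by rewrite big_nat_cond big1 // => j; rewrite andbT.
  under eq_bigr do rewrite eqSS.
  by rewrite sum_delta (ltnW hm).
by rewrite mulNr (addrC (- _)).
Qed.

Lemma XJ : Xm *m Jc = 1%:M.
Proof.
apply/matrixP => i m; rewrite [LHS]mxE [RHS]mxE.
have hi : (0 < i.+1 <= b)%N by rewrite ltn_ord.
have -> : \sum_(j < b) Xm i j * Jc j m = \sum_(j < b) (fun j => yy i.+1 j.+1) j * Jc j m.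
  by apply: eq_bigr => j _; rewrite [Xm _ _]mxE.
rewrite (prod_entry (fun j => yy i.+1 j.+1)) /=.
have hm := ltn_ord m.
have E : yy i.+1 m - c m.+1 * yy i.+1 m.+1 - (yy i.+1 m.+1 - c m.+1 * yy i.+1 m.+2)
        = (m.+1 == i.+1)%:R.
  rewrite (yy_step i.+1 (j:=m)) ?(ltnW hm) // (yy_step i.+1 (j:=m.+1)) //.
  rewrite -(zz_eq hi hm); ring.
rewrite eqSS eq_sym in E; rewrite -val_eqE /= -E.
have -> : (if val m is m'.+1 then yy i.+1 m'.+1 else 0) = yy i.+1 m.
  case: m hm {E} => [[|k] hk] _ /=; last by [].
  by rewrite yy0.
have -> : (if (m.+1 < b)%N then c m.+1 * yy i.+1 m.+2 else 0) = c m.+1 * yy i.+1 m.+2.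
  case: ifP => // h; have -> : m.+2 = b.+1 by lia.
  by rewrite yy_end mulr0.
ring.
Qed.

Lemma invJ : invmx Jc = Xm.
Proof.
have [hX hJ] := mulmx1_unit XJ.
by rewrite -[LHS]mul1mx -XJ -mulmxA mulmxV // mulmx1.
Qed.

Lemma yy_diag ii : yy ii ii = beta ii * BB ii.
Proof.
rewrite /yy /BB mulr_sumr big_nat_cond [RHS]big_nat_cond.
by apply: eq_bigr => k /andP[/andP[hk _] _]; rewrite /zz ltnNge hk.
Qed.

Lemma diag_neg ii : (0 < ii <= b)%N -> yy ii ii < 0.
Proof.
move=> h; have hd := den_gt0 h; case/andP: h => h1 h2.
have hA := AA_ge1 h1; have hB := BB_ge1 h2.
rewrite yy_diag /beta !mulNr oppr_lt0; apply: mulr_gt0; last lra.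
apply: divr_gt0 => //; lra.
Qed.

Lemma diag1 : (0 < b)%N -> c 1 <= 2 -> 1 / 3 <= `| yy 1 1 |.
Proof.
move=> hb hc1.
have hA : AA 1 = 1 by rewrite /AA big_nat1 pr_nil.
have hT : TT 1 = c 1 * pr 2 b.+1 by rewrite /TT pr_rec.
have hp := pr_ge0 2 b.+1.
have hB : pr 2 b.+1 <= BB 1.
  rewrite /BB big_ltn // lerDl; apply: sumr_ge0 => k _; exact: pr_ge0.
have hB1 := BB_ge1 hb.
have hd : 0 < TT 1 * AA 1 + BB 1 by apply: den_gt0; rewrite ltnSn hb.
have hc0 := hc 1.
rewrite hA hT mulr1 in hd.
rewrite yy_diag /beta hA hT mulr1 !mulNr normrN ger0_norm; last first.
  apply: mulr_ge0; last lra. apply: divr_ge0; lra.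
have h2 : c 1 * pr 2 b.+1 <= 2 * pr 2 b.+1 by apply: ler_wpM2r.
rewrite mulrC mul1r mulr1.
rewrite [_^-1 * _]mulrC.
rewrite ler_pdivlMr; last lra.
lra.
Qed.
End Gen.

Lemma lam_bounds (R : realType) (N : nat) (gamma alpha : R) :
  (1 <= N)%N -> 0 < gamma -> gamma <= 1 -> 0 < alpha ->
  0 <= lam N gamma alpha <= 1.
Proof.
move=> hN hg0 hg1 ha.
have hN1 : (1 : R) <= N%:R by rewrite ler1n.
have hp : 1 <= N%:R `^ alpha.
  by rewrite -{1}(powRr0 (N%:R : R)); apply: (ler_powR hN1); exact: ltW.
have hq : gamma / N%:R `^ alpha <= gamma.
  by rewrite ler_pdivrMr; [nra | lra].
have hq0 : 0 <= gamma / N%:R `^ alpha by apply: divr_ge0; lra.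
rewrite /lam; apply/andP; split; lra.
Qed.

Theorem lemma8 (R : realType) (N : nat) (gamma alpha : R) (b : nat)
    (s : nat -> R)
    (hN : (1 <= N)%N) (hg0 : 0 < gamma) (hg1 : gamma <= 1) (ha : 0 < alpha)
    (hb : (0 < b)%N)
    (hs : is_ordered_equilibrium b (lam N gamma alpha) s) :
  1 / 3 <= `| (invmx (Jac b (lam N gamma alpha) s)) (Ordinal hb) (Ordinal hb) |
  /\ (forall i : 'I_b, (invmx (Jac b (lam N gamma alpha) s)) i i < 0).
Proof.
have /andP[hl0 hl1] := lam_bounds hN hg0 hg1 ha.
move: (lam N gamma alpha) hl0 hl1 hs => l hl0 hl1 hs.
case: hs => _ [_ [_ [hs1 [hmono hsb]]]].
have hle1 : forall k, (1 <= k <= b)%N -> s k <= 1.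
  elim=> [//|k IH] /andP[_ hk].
  case: k IH hk => [|k] IH hk; first by [].
  apply: le_trans (hmono k.+1 _) (IH _); lia.
have hge0 : forall d k, (k + d = b)%N -> (1 <= k)%N -> 0 <= s k.
  elim=> [|d IH] k hkd hk; first by rewrite addn0 in hkd; rewrite hkd.
  apply: le_trans (IH k.+1 _ _) (hmono k _); lia.
have hsk : forall k, (1 <= k <= b)%N -> 0 <= s k <= 1.
  move=> k hk; rewrite hle1 // andbT; apply: (hge0 (b - k)%N); lia.
pose c k := if (1 <= k <= b)%N then 2 * l * s k else 0.
have hc : forall k, 0 <= c k.
  move=> k; rewrite /c; case: ifP => // hk.
  have := hsk k hk => /andP[? ?]; apply: mulr_ge0 => //; lra.
have hc1 : c 1 <= 2.
  rewrite /c hb /=; have := hsk 1%N; rewrite hb /= => /(_ isT) /andP[h0 h1].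
  have : l * s 1%N <= 1 * 1 by apply: ler_pM.
  rewrite -mulrA; lra.
have EJ : Jac b l s = Jc b c.
  apply/matrixP => i j; rewrite !mxE /c.
  have -> : (1 <= i.+1 <= b)%N by rewrite ltn_ord.
  by have -> : (1 <= j.+1 <= b)%N by rewrite ltn_ord.
rewrite EJ invJ //; split.
  rewrite mxE /=; exact: diag1.
move=> i; rewrite mxE; apply: diag_neg => //; by rewrite ltn_ord.
Qed.
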